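(* There exist partition exchange economies with cycle bound $\Delta=3$ and arbitrarily large $|V|$ whose $\big(\tfrac{|V|}{10}-1\big)$-supplemented core is empty.
   Context: A partition exchange economy consists of organizations $N=\{1,\dots,n\}$; pairwise disjoint finite sets $V^1,\dots,V^n$, $V=\bigcup_iV^i$; patient sets $U^i\subseteq V^i$; a directed compatibility graph $\mathcal G=(V,E)$; and a cycle bound $\Delta$. An exchange among $W\subseteq V$ is a set of vertex-disjoint directed cycles of length at most $\Delta$ in $\mathcal G[W]$; $u_i(\mathcal E)$ is the number of vertices of $U^i$ lying on cycles of $\mathcal E$. Given a finite set $V^0$ of new vertices (additional altruistic donors, in no organization), $\mathcal G^{+V^0}$ adds these vertices, an arc from every other vertex into each $a\in V^0$, and for each $a\in V^0$ arcs from $a$ to an arbitrarily chosen set of vertices; exchanges in $\mathcal G^{+V^0}$ are sets of vertex-disjoint cycles of length $\le\Delta$ in it. A nonempty coalition $P\subseteq N$ blocks an exchange $\mathcal E$ if some exchange $\mathcal E'$ among $\bigcup_{i\in P}V^i$ (in $\mathcal G$) has $u_i(\mathcal E')>u_i(\mathcal E)$ for all $i\in P$. An exchange of $\mathcal G^{+V^0}$ blocked by no coalition is in the $V^0$-supplemented core. The $d$-supplemented core is nonempty if for some $V^0$ with $|V^0|\le d$ and some choice of its out-arcs the $V^0$-supplemented core is nonempty; otherwise it is empty. *)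

(* Defs.v *)
From mathcomp Require Import all_boot all_order all_algebra.
Set Implicit Arguments. Unset Strict Implicit. Unset Printing Implicit Defensive.
Import GRing.Theory Num.Theory.

(* Vertex set V = vtx; organization of a vertex = org v (so the V^i are the
   fibres of org, pairwise disjoint, covering V); patients U = union of U^i,
   with U^i = patient :&: V^i; directed compatibility graph = arc (no loops). *)
Record economy := Economy {
  n_org : nat;
  vtx : finType;
  org : vtx -> 'I_n_org;
  patient : {set vtx};
  arc : rel vtx;
  arc_irr : irreflexive arc
}.

(* An exchange among W in the digraph e with cycle bound delta: a list of
   vertex-disjoint directed cycles (each given by its cyclic vertex sequence),
   each of length between 1 and delta, all vertices in W. *)
Definition is_exchange (T : finType) (e : rel T) (delta : nat) (W : {set T})
    (X : seq (seq T)) : bool :=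
  [&& uniq (flatten X),
      all (fun c => [&& 0 < size c, size c <= delta & cycle e c]) X &
      all (fun v => v \in W) (flatten X)].

(* u_i: number of patients of organization i lying on cycles of X, where the
   economy's vertices are embedded into T by emb. *)
Definition util (ec : economy) (T : finType) (emb : vtx ec -> T)
    (i : 'I_(n_org ec)) (X : seq (seq T)) : nat :=
  #|[set v : vtx ec | [&& v \in patient ec, org v == i & emb v \in flatten X]]|.

(* G^{+V^0} with V^0 = 'I_k: arcs from every other vertex into each altruist,
   and from altruist a to the chosen set S a of original vertices. *)
Definition supp_arc (ec : economy) (k : nat) (S : 'I_k -> {set vtx ec})
    : rel (vtx ec + 'I_k)%type :=
  fun x y => match x, y with
  | inl a, inl b => @arc ec a b
  | inl _, inr _ => true
  | inr a, inr b => a != b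
  | inr a, inl b => b \in S a
  end.

Definition blocks (ec : economy) (delta : nat) (P : {set 'I_(n_org ec)})
    (ui : 'I_(n_org ec) -> nat) : Prop :=
  P != set0 /\
  exists X' : seq (seq (vtx ec)),
    is_exchange (@arc ec) delta [set v | org v \in P] X' /\
    forall i, i \in P -> ui i < util id i X'.

(* The V^0-supplemented core (|V^0| = k, out-arcs S) is empty. *)
Definition supp_core_empty_for (ec : economy) (delta k : nat)
    (S : 'I_k -> {set vtx ec}) : Prop :=
  forall X : seq (seq (vtx ec + 'I_k)%type),
    is_exchange (supp_arc S) delta setT X ->
    exists P, blocks delta P (fun i => util inl i X).

Definition supp_core_empty (ec : economy) (delta : nat) (d : rat) : Prop :=
  forall k : nat, (k%:R <= d)%R ->
  forall S : 'I_k -> {set vtx ec}, supp_core_empty_for delta S.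

(* Main.v *)
Require Import Defs.
From mathcomp Require Import all_boot all_order all_algebra.
From mathcomp Require Import lra zify.
Import GRing.Theory Num.Theory.
Set Implicit Arguments. Unset Strict Implicit. Unset Printing Implicit Defensive.

Definition garcn (x y : nat) : bool :=
  (x, y) \in [:: (0,1);(1,2);(2,0);(2,3);(3,4);(4,2);(4,5);(5,1);(1,4)].
Definition ogn (n : nat) : nat := n./2.
Definition G := 'I_6.
Definition garc (x y : G) : bool := garcn (val x) (val y).
Lemma og_lt (g : G) : ogn (val g) < 3.
Proof. by case: g => [[|[|[|[|[|[|]]]]]]]. Qed.
Definition og (g : G) : 'I_3 := Ordinal (og_lt g).

Lemma garcn_irr n : garcn n n = false.
Proof. by rewrite /garcn !inE !xpair_eqE; case: n => [|[|[|[|[|[|n]]]]]]. Qed.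

Lemma card_val n (P : pred nat) : #|[set g : 'I_n | P (val g)]| = count P (iota 0 n).
Proof.
rewrite -val_enum_ord count_map cardE /enum_mem size_filter.
rewrite filter_predT. by apply: eq_count => g; rewrite /= inE.
Qed.

Section Eco.
Variable N : nat.
Definition vtxT := (G * 'I_N)%type.
Definition orgf (v : vtxT) := enum_rank (v.2, og v.1).
Lemma arcirr : irreflexive (fun v w : vtxT => (v.2 == w.2) && garc v.1 w.1).
Proof. by move=> v; rewrite /garc garcn_irr andbF. Qed.
Definition ecN : economy := Economy orgf setT arcirr.
End Eco.

Lemma util_lift N (T : finType) (emb : vtxT N -> T) (Z : seq (seq T)) (j : 'I_N) (q : 'I_3) :
  @util (ecN N) T emb (enum_rank (j, q)) Z =
  #|[set g : G | (og g == q) && (emb (g, j) \in flatten Z)]|.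
Proof.
rewrite /util -[RHS](card_imset _ (fun a b (h : (a, j) = (b, j)) => congr1 fst h)).
apply: eq_card => -[g j']; rewrite !inE /=.
rewrite /orgf (inj_eq enum_rank_inj) xpair_eqE.
rewrite /=.
apply/idP/imsetP => [/andP[/andP[/eqP-> hq] h] | [g' ]].
  by exists g => //; rewrite inE hq h.
by rewrite inE => /andP[/eqP <- h] [-> ->]; rewrite !eqxx h.
Qed.

Lemma uniq_cyc (T : eqType) (X : seq (seq T)) c1 c2 x :
  uniq (flatten X) -> c1 \in X -> c2 \in X -> x \in c1 -> x \in c2 -> c1 = c2.
Proof.
elim: X => [|c X IH] //=; rewrite cat_uniq => /and3P[_ hn hu].
have hx : forall c', c' \in X -> x \in c' -> x \in c -> False.
  move=> c' hc' h1 h2; case/hasP: hn; exists x => //; apply/flattenP; by exists c'.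
rewrite !inE => /orP[/eqP-> | h1] /orP[/eqP-> | h2] // x1 x2.
- by case: (hx _ h2 x2 x1).
- by case: (hx _ h1 x1 x2).
- exact: IH.
Qed.

Definition EXn : seq (seq nat) := [:: [::]; [:: 0; 1; 2]; [:: 2; 3; 4]; [:: 1; 4; 5]].
Definition sameset (A B : seq nat) := all (fun n => (n \in A) == (n \in B)) (iota 0 6).
Lemma chk2 : all (fun x => all (fun y => ~~ (garcn x y && garcn y x)) (iota 0 6)) (iota 0 6).
Proof. by []. Qed.
Lemma chk3 : all (fun x => all (fun y => all (fun z =>
  (garcn x y && garcn y z && garcn z x) ==> has (sameset^~ [:: x; y; z]) EXn)
  (iota 0 6)) (iota 0 6)) (iota 0 6).
Proof. by []. Qed.
Lemma chkU : all (fun A => all (fun B =>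
  all (fun n => ~~ ((n \in A) && (n \in B))) (iota 0 6) ==>
  has (fun C => all (fun n => (n \in C) == ((n \in A) || (n \in B))) (iota 0 6)) EXn) EXn) EXn.
Proof. by []. Qed.
Lemma memG (g : G) : val g \in iota 0 6.
Proof. by rewrite mem_iota ltn_ord. Qed.

Lemma util_tri N (j : 'I_N) (q : 'I_3) (A B C : G) :
  @util (ecN N) _ id (enum_rank (j, q)) [:: [:: (A, j); (B, j); (C, j)]] =
  count (fun n => (ogn n == val q) && (n \in [:: val A; val B; val C])) (iota 0 6).
Proof.
rewrite util_lift -card_val; apply: eq_card => g; rewrite !inE -(inj_eq val_inj) /=.
by rewrite !xpair_eqE !eqxx !andbT -!(inj_eq val_inj).
Qed.

Lemma util_W N k (X : seq (seq (vtxT N + 'I_k))) (j : 'I_N) (q : 'I_3) (T : seq nat) :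
  (forall g : G, (inl (g, j) \in flatten X) = (val g \in T)) ->
  @util (ecN N) _ inl (enum_rank (j, q)) X =
  count (fun n => (ogn n == val q) && (n \in T)) (iota 0 6).
Proof.
move=> h; rewrite util_lift -card_val; apply: eq_card => g.
by rewrite !inE -(inj_eq val_inj) /= h.
Qed.

Section Main.
Variables (N k : nat) (S : 'I_k -> {set vtx (ecN N)}).
Notation sarc := (@supp_arc (ecN N) k S).

Lemma arc_copy (v w : vtxT N) : sarc (inl v) (inl w) -> v.2 = w.2.
Proof. by rewrite /supp_arc /= => /andP[/eqP]. Qed.

Lemma one_copy (c : seq (vtxT N + 'I_k)) v w :
  cycle sarc c -> size c <= 3 -> inl v \in c -> inl w \in c -> v.2 = w.2.
Proof.
case: c => [|x [|y [|z [|t c]]]] //=.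
- by rewrite !inE => _ _ /eqP hv /eqP hw; subst; case: hw => ->.
- rewrite !andbT !inE => /andP[hxy hyx] _.
  case/orP=> /eqP hv /orP[] /eqP hw; subst; try by case: hw => ->.
    by move/arc_copy: hxy.
  by move/arc_copy: hyx.
- rewrite !andbT !inE => /and3P[hxy hyz hzx] _.
  case/or3P=> /eqP hv /or3P[] /eqP hw; subst;
  first [ by case: hw => -> | by move/arc_copy: hxy | by move/arc_copy: hyz | by move/arc_copy: hzx
        | by move/arc_copy: hxy => -> | by move/arc_copy: hyz => -> | by move/arc_copy: hzx => -> ].
Qed.

Definition isj (j : 'I_N) (x : vtxT N + 'I_k) := if x is inl v then v.2 == j else false.
Definition isr (x : vtxT N + 'I_k) := if x is inr _ then true else false.
Definition bad j (c : seq (vtxT N + 'I_k)) := has isr c && has (isj j) c.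

Variable X : seq (seq (vtxT N + 'I_k)).
Hypothesis hX : is_exchange sarc 3 setT X.

Lemma hXu : uniq (flatten X). Proof. by case/and3P: hX. Qed.
Lemma hXc c : c \in X -> [&& 0 < size c, size c <= 3 & cycle sarc c].
Proof. by case/and3P: hX => _ /allP h _ /h. Qed.

Lemma bad_card (j0 : 'I_N) : #|[set j | has (bad j) X]| <= k.
Proof.
pose f (a : 'I_k) := odflt j0 [pick j | has (fun c => (inr a \in c) && has (isj j) c) X].
have sub : [set j | has (bad j) X] \subset f @: setT.
  apply/subsetP => j; rewrite inE => /hasP[c hc /andP[/hasP[x hx hxr] /hasP[y hy hyj]]].
  case: x hx hxr => // a hx _; case: y hy hyj => // -[g j'] hy /= /eqP ej; subst j'.
  apply/imsetP; exists a => //; rewrite /f.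
  case: pickP => [j' /hasP[c' hc' /andP[ha /hasP[y' hy' hyj']]] | /(_ j) h].
    case: y' hy' hyj' => // -[g' j''] hy' /= /eqP ej; subst j''.
    have ecc := uniq_cyc hXu hc hc' hx ha; subst c'.
    case/and3P: (hXc hc) => _ hs hcy.
    by have := one_copy hcy hs hy hy'.
  move: h => /= h; suff : false by [].
  rewrite -h; apply/hasP; exists c => //; rewrite hx /=; apply/hasP; exists (inl (g, j)) => //=.
apply: leq_trans (subset_leq_card sub) _.
by apply: leq_trans (leq_imset_card _ _) _; rewrite cardsT card_ord.
Qed.

Lemma cyc_class j c : c \in X -> ~~ bad j c ->
  exists2 T, T \in EXn & forall g : G, (inl (g, j) \in c) = (val g \in T).
Proof.
move=> hc nb; case hj: (has (isj j) c); last first.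
  exists [::] => // g; apply/negbTE/negP => hg.
  by move/negbT/hasPn: hj => /(_ _ hg); rewrite /= eqxx.
have nr : ~~ has isr c by move: nb; rewrite /bad hj andbT.
case/and3P: (hXc hc) => h0 h3 hcy.
move: nr hj h0 h3 hcy; case: c {hc nb} => [|x [|y [|z [|t c]]]] //=.
- case: x => [[gx jx]|//] _ _ _ _; by rewrite /supp_arc /= /garc garcn_irr andbF.
- case: x => [[gx jx]|//]; case: y => [[gy jy]|//] _ _ _ _.
  rewrite /supp_arc /= /garc => /and3P[/andP[_ h1] /andP[_ h2] _].
  by move/allP: chk2 => /(_ _ (memG gx)) /allP /(_ _ (memG gy)); rewrite h1 h2.
- case: x => [[gx jx]|//]; case: y => [[gy jy]|//]; case: z => [[gz jz]|//] _.
  rewrite /supp_arc /= /garc => hj _ _ /and4P[/andP[/eqP e1 h1] /andP[/eqP e2 h2] /andP[/eqP e3 h3] _].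
  subst jy jz; have ej : jx = j by apply/eqP; move: hj; rewrite !orbF !orbb. subst jx.
  move/allP: chk3 => /(_ _ (memG gx)) /allP /(_ _ (memG gy)) /allP /(_ _ (memG gz)).
  rewrite h1 h2 h3 => /implyP /(_ isT) /hasP[T hT hs]; exists T => // g.
  move/allP: hs => /(_ _ (memG g)) /eqP ->.
  have -> : [:: inl (gx, j); inl (gy, j); inl (gz, j)] = map (fun g : G => inl (g, j)) [:: gx; gy; gz] by [].
  have inj : injective (fun g : G => inl (g, j) : vtxT N + 'I_k) by move=> a b [].
  rewrite (mem_map inj).
  by rewrite -(mem_map val_inj).
Qed.

Lemma W_gen j (Y : seq (seq (vtxT N + 'I_k))) : uniq (flatten Y) -> {subset Y <= X} ->
  ~~ has (bad j) Y ->
  exists2 T, T \in EXn & forall g : G, (inl (g, j) \in flatten Y) = (val g \in T).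
Proof.
elim: Y => [|c Y IH] /=; first by move=> _ _ _; exists [::].
rewrite cat_uniq negb_or => /and3P[_ hd hu] hsub /andP[nb nbs].
have hsub' : {subset Y <= X} by move=> x hx; apply: hsub; rewrite inE hx orbT.
have [T' hT' eT'] := IH hu hsub' nbs.
have [Tc hTc eTc] := cyc_class (hsub c (mem_head _ _)) nb.
have hdis : all (fun n => ~~ ((n \in Tc) && (n \in T'))) (iota 0 6).
  apply/allP => n; rewrite mem_iota add0n => hn.
  have := eTc (Ordinal hn); have := eT' (Ordinal hn); rewrite /= => <- <-.
  apply/negP => /andP[h1 h2]; case/hasP: hd; exists (inl (Ordinal hn, j)) => //.
move/allP: chkU => /(_ _ hTc) /allP /(_ _ hT'); rewrite hdis => /implyP /(_ isT) /hasP[C hC hCe].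
exists C => // g; rewrite mem_cat eTc eT'.
by move/allP: hCe => /(_ _ (memG g)) /eqP ->.
Qed.

Lemma lift_tri j (a b c qa qb : nat) (ha : a < 6) (hb : b < 6) (hc : c < 6)
  (hqa : qa < 3) (hqb : qb < 3) :
  [&& garcn a b, garcn b c, garcn c a & uniq [:: a; b; c]] ->
  all (fun n => (ogn n == qa) || (ogn n == qb)) [:: a; b; c] ->
  @util (ecN N) _ inl (enum_rank (j, Ordinal hqa)) X <
    count (fun n => (ogn n == qa) && (n \in [:: a; b; c])) (iota 0 6) ->
  @util (ecN N) _ inl (enum_rank (j, Ordinal hqb)) X <
    count (fun n => (ogn n == qb) && (n \in [:: a; b; c])) (iota 0 6) ->
  exists P, @blocks (ecN N) 3 P (fun i => @util (ecN N) _ inl i X).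
Proof.
move=> /and4P[h1 h2 h3 hu] hog ua ub.
pose A : G := Ordinal ha; pose B : G := Ordinal hb; pose C : G := Ordinal hc.
exists [set enum_rank (j, Ordinal hqa); enum_rank (j, Ordinal hqb)]; split.
  by apply/set0Pn; exists (enum_rank (j, Ordinal hqa)); rewrite !inE eqxx.
exists [:: [:: (A, j); (B, j); (C, j)]]; split.
  have hP : forall g : G, (ogn (val g) == qa) || (ogn (val g) == qb) ->
      ((g, j) : vtx (ecN N)) \in [set v : vtx (ecN N) | org v \in
         [set enum_rank (j, Ordinal hqa); enum_rank (j, Ordinal hqb)]].
    move=> g /orP[] /eqP e; rewrite !inE /= /orgf.
      have -> : og g = Ordinal hqa by apply: val_inj.
      by rewrite eqxx.
    have -> : og g = Ordinal hqb by apply: val_inj.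
    by rewrite eqxx orbT.
  move: hog => /=; rewrite !andbT => /and3P[oa ob oc].
  rewrite /is_exchange /= !andbT !eqxx /= (hP A oa) (hP B ob) (hP C oc).
  rewrite /garc /= h1 h2 h3 /= !andbT.
  move: hu; rewrite /= !inE !andbT !negb_or => /andP[/andP[nab nac] nbc].
  by rewrite !xpair_eqE !eqxx !andbT -!(inj_eq val_inj) /= nab nac nbc.
move=> i; rewrite !inE => /orP[] /eqP ->; rewrite util_tri /=.
  by apply: leq_trans ua _.
by apply: leq_trans ub _.
Qed.
End Main.
Lemma tst (k : nat) (m : nat) : (k%:R <= (6 * m.+1)%:R / 10 - 1 :> rat)%R -> k < m.+1.
Proof.
move=> hk.
have : ((10 * k.+1)%:R <= (6 * m.+1)%:R :> rat)%R.
  have e1 : (((10 * k.+1)%:R : rat) = 10 * (k%:R + 1))%R.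
    by rewrite natrM -[k.+1]addn1 natrD.
  have e2 : (((6 * m.+1)%:R : rat) = 6 * (m.+1)%:R)%R by rewrite natrM.
  move: hk; rewrite e1 e2. lra.
rewrite ler_nat. lia.
Qed.

Theorem mainTheorem3 :
  forall m : nat, exists ec : economy,
    m <= #|vtx ec| /\
    supp_core_empty ec 3 (#|vtx ec|%:R / 10 - 1)%R.
Proof.
move=> m; exists (ecN m.+1).
have hc : #|vtx (ecN m.+1)| = 6 * m.+1 by rewrite /= card_prod !card_ord.
split; first by rewrite hc; lia.
move=> k hk S X hX; rewrite hc in hk; have hkN := tst hk.
have [j hj] : exists j, ~~ has (bad j) X.
  case: (pickP (fun j => ~~ has (bad j) X)) => [j hj | h]; first by exists j.
  have := bad_card hX ord0.
  have -> : [set j | has (bad j) X] = setT.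
    by apply/setP => j; rewrite !inE; move: (h j) => /= /negbFE.
  by rewrite cardsT card_ord leqNgt hkN.
have [T hT eT] := W_gen hX (hXu hX) (fun x h => h) hj.
move: hT; rewrite !inE => /or4P[] /eqP eTT; subst T.
- apply: (@lift_tri _ _ X j 0 1 2 0 1 isT isT isT isT isT) => //; by rewrite (util_W _ eT).
- apply: (@lift_tri _ _ X j 2 3 4 1 2 isT isT isT isT isT) => //; by rewrite (util_W _ eT).
- apply: (@lift_tri _ _ X j 4 5 1 2 0 isT isT isT isT isT) => //; by rewrite (util_W _ eT).
- apply: (@lift_tri _ _ X j 0 1 2 0 1 isT isT isT isT isT) => //; by rewrite (util_W _ eT).
Qed.
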